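(* Let $k$ be an algebraically closed field of characteristic $0$, let $G,G'$ be finite groups, and $J$, $J'$ twists for $k[G]$, $k[G']$ respectively. Suppose that the triangular Hopf algebras $(k[G]^J,J_{21}^{-1}J)$ and $(k[G']^{J'},J'^{-1}_{21}J')$ are isomorphic. Then there exists a group isomorphism $\phi:G\to G'$ such that $(\phi\otimes\phi)(J)$ is gauge equivalent to $J'$.
   Context: A twist for a Hopf algebra $A$ is an invertible $J\in A\otimes A$ with $(\Delta\otimes\mathrm{id})(J)(J\otimes 1)=(\mathrm{id}\otimes\Delta)(J)(1\otimes J)$ and $(\varepsilon\otimes\mathrm{id})(J)=(\mathrm{id}\otimes\varepsilon)(J)=1$. $A^J$ is the Hopf algebra with the same algebra and counit, coproduct $\Delta^J(x)=J^{-1}\Delta(x)J$ and antipode $S^J(x)=Q^{-1}S(x)Q$, $Q=m\circ(S\otimes\mathrm{id})(J)$; $(k[G]^J,J_{21}^{-1}J)$ is triangular, $J_{21}=\tau(J)$. An isomorphism of triangular Hopf algebras $(A,R)\to(A',R')$ is a Hopf algebra isomorphism $f$ with $(f\otimes f)(R)=R'$. Twists $J_1,J_2$ are gauge equivalent if $J_2=\Delta(x)J_1(x^{-1}\otimes x^{-1})$ for some invertible $x$ with $\varepsilon(x)=1$. *)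

(* Defs.v *)
From mathcomp Require Import all_boot all_algebra all_fingroup.
Set Implicit Arguments. Unset Strict Implicit. Unset Printing Implicit Defensive.
Import GRing.Theory.
Local Open Scope ring_scope.

(* Group algebra k[T] (T finite, with a multiplication m and unit e),
   represented by coefficient functions: a = \sum_g a g * g. *)
Section Conv.
Variables (k : fieldType) (T : finType) (m : T -> T -> T) (e : T).
Definition conv (a b : {ffun T -> k}) : {ffun T -> k} :=
  [ffun g => \sum_(x : T) \sum_(y : T) if m x y == g then a x * b y else 0].
Definition unitf : {ffun T -> k} := [ffun g => (g == e)%:R].
Definition is_inv (a ai : {ffun T -> k}) :=
  conv a ai = unitf /\ conv ai a = unitf.
End Conv.

Section GroupAlg.
Variables (k : fieldType) (gT : finGroupType).
Definition mul2 (x y : gT * gT) : gT * gT := ((x.1 * y.1)%g, (x.2 * y.2)%g).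
Definition mul3 (x y : gT * gT * gT) : gT * gT * gT :=
  (((x.1.1 * y.1.1)%g, (x.1.2 * y.1.2)%g), (x.2 * y.2)%g).

Definition gmul := @conv k gT (fun x y => (x * y)%g).
Definition g1 : {ffun gT -> k} := unitf k 1%g.
Definition gmul2 := @conv k _ mul2.
Definition g1_2 : {ffun gT * gT -> k} := unitf k (1%g, 1%g).
Definition gmul3 := @conv k _ mul3.

Definition Delta (a : {ffun gT -> k}) : {ffun gT * gT -> k} :=
  [ffun p => if p.1 == p.2 then a p.1 else 0].
Definition eps (a : {ffun gT -> k}) : k := \sum_g a g.
Definition antipode (a : {ffun gT -> k}) : {ffun gT -> k} := [ffun g => a (g^-1)%g].
Definition tens (a b : {ffun gT -> k}) : {ffun gT * gT -> k} :=
  [ffun p => a p.1 * b p.2].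
Definition flip (J : {ffun gT * gT -> k}) : {ffun gT * gT -> k} :=
  [ffun p => J (p.2, p.1)].

(* (Delta ⊗ id)(J), (id ⊗ Delta)(J), J ⊗ 1, 1 ⊗ J *)
Definition Delta_id (J : {ffun gT * gT -> k}) : {ffun gT * gT * gT -> k} :=
  [ffun p => if p.1.1 == p.1.2 then J (p.1.1, p.2) else 0].
Definition id_Delta (J : {ffun gT * gT -> k}) : {ffun gT * gT * gT -> k} :=
  [ffun p => if p.1.2 == p.2 then J (p.1.1, p.1.2) else 0].
Definition tens_1 (J : {ffun gT * gT -> k}) : {ffun gT * gT * gT -> k} :=
  [ffun p => if p.2 == 1%g then J (p.1.1, p.1.2) else 0].
Definition one_tens (J : {ffun gT * gT -> k}) : {ffun gT * gT * gT -> k} :=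
  [ffun p => if p.1.1 == 1%g then J (p.1.2, p.2) else 0].
Definition eps_id (J : {ffun gT * gT -> k}) : {ffun gT -> k} :=
  [ffun h => \sum_g J (g, h)].
Definition id_eps (J : {ffun gT * gT -> k}) : {ffun gT -> k} :=
  [ffun g => \sum_h J (g, h)].

Definition is_twist (J : {ffun gT * gT -> k}) : Prop :=
  (exists Ji, is_inv mul2 (1%g, 1%g) J Ji) /\
  gmul3 (Delta_id J) (tens_1 J) = gmul3 (id_Delta J) (one_tens J) /\
  eps_id J = g1 /\ id_eps J = g1.

(* Twisted coproduct Delta^J(x) = J^{-1} Delta(x) J, with Ji the inverse of J *)
Definition DeltaJ (J Ji : {ffun gT * gT -> k}) (a : {ffun gT -> k}) :=
  gmul2 (gmul2 Ji (Delta a)) J.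
(* Q = m o (S ⊗ id)(J) *)
Definition Qof (J : {ffun gT * gT -> k}) : {ffun gT -> k} :=
  [ffun g => \sum_(p : gT * gT | ((p.1)^-1 * p.2)%g == g) J p].
(* twisted antipode S^J(x) = Q^{-1} S(x) Q, with Qi the inverse of Q *)
Definition SJ (Q Qi : {ffun gT -> k}) (a : {ffun gT -> k}) :=
  gmul (gmul Qi (antipode a)) Q.
(* R-matrix J_21^{-1} J ; (J_21)^{-1} = (J^{-1})_21 *)
Definition Rmat (J Ji : {ffun gT * gT -> k}) := gmul2 (flip Ji) J.
End GroupAlg.

(* A k-linear map k[G] -> k[G'] given by the images F g of the basis vectors g *)
Section LinMap.
Variables (k : fieldType) (gT hT : finGroupType).
Definition applyL (F : gT -> {ffun hT -> k}) (a : {ffun gT -> k}) : {ffun hT -> k} :=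
  [ffun h => \sum_g a g * F g h].
Definition applyL2 (F : gT -> {ffun hT -> k}) (x : {ffun gT * gT -> k})
  : {ffun hT * hT -> k} :=
  [ffun q => \sum_(p : gT * gT) x p * F p.1 q.1 * F p.2 q.2].

Definition tri_hopf_iso (J Ji : {ffun gT * gT -> k}) (J' Ji' : {ffun hT * hT -> k})
  (F : gT -> {ffun hT -> k}) : Prop :=
  let f := applyL F in
  bijective f /\
      (forall a b, f (gmul a b) = gmul (f a) (f b)) /\
      f (g1 k gT) = g1 k hT /\
      (forall a, eps (f a) = eps a) /\
      (forall a, applyL2 F (DeltaJ J Ji a) = DeltaJ J' Ji' (f a)) /\
      (forall Qi Qi', is_inv (fun x y => (x * y)%g) 1%g (Qof J) Qi ->
                      is_inv (fun x y => (x * y)%g) 1%g (Qof J') Qi' ->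
         forall a, f (SJ (Qof J) Qi a) = SJ (Qof J') Qi' (f a)) /\
      applyL2 F (Rmat J Ji) = Rmat J' Ji'.

Definition push2 (phi : gT -> hT) (J : {ffun gT * gT -> k}) : {ffun hT * hT -> k} :=
  [ffun q => \sum_(p : gT * gT | (phi p.1, phi p.2) == q) J p].
End LinMap.

Definition gauge_equiv (k : fieldType) (gT : finGroupType)
  (J1 J2 : {ffun gT * gT -> k}) : Prop :=
  exists x xi : {ffun gT -> k},
    is_inv (fun a b => (a * b)%g) 1%g x xi /\ eps x = 1 /\
    J2 = gmul2 (gmul2 (Delta x) J1) (tens xi xi).

(* Main.v *)
Require Import Defs.
From mathcomp Require Import all_boot all_algebra all_fingroup.

Set Implicit Arguments. Unset Strict Implicit. Unset Printing Implicit Defensive.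
Import GRing.Theory.
Local Open Scope ring_scope.

Section Gen.
Variable k : fieldType.

Definition cv (T : finGroupType) (a b : {ffun T -> k}) : {ffun T -> k} :=
  @conv k T (fun x y => (x * y)%g) a b.
Definition dl (T : finType) (s : T) : {ffun T -> k} := [ffun t => (t == s)%:R].
Definition lin (S T : finType) (F : S -> {ffun T -> k}) (a : {ffun S -> k})
  : {ffun T -> k} := [ffun t => \sum_s a s * F s t].

Lemma cvE (T : finGroupType) (a b : {ffun T -> k}) g :
  cv a b g = \sum_x a x * b (x^-1 * g)%g.
Proof.
rewrite ffunE; apply: eq_bigr => x _.
rewrite (eq_bigr (fun y => if y == (x^-1 * g)%g then a x * b y else 0)).
  by rewrite -big_mkcond big_pred1_eq.
move=> y _; have -> : ((x * y)%g == g) = (y == (x^-1 * g)%g).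
  by apply/eqP/eqP => [<-|->]; rewrite ?mulKg ?mulKVg.
by [].
Qed.

Lemma dlE (T : finType) (s t : T) : dl s t = (t == s)%:R.
Proof. by rewrite ffunE. Qed.

Lemma sum_dl (T : finType) (s : T) (G : T -> k) :
  \sum_t (t == s)%:R * G t = G s.
Proof.
rewrite (bigD1 s) //= eqxx mul1r big1 ?addr0 // => t /negbTE ->.
by rewrite mul0r.
Qed.

Lemma sum_dl' (T : finType) (s : T) (G : T -> k) :
  \sum_t G t * (t == s)%:R = G s.
Proof. by rewrite -[RHS](sum_dl s); apply: eq_bigr => t _; rewrite mulrC. Qed.

Lemma cvA (T : finGroupType) (a b c : {ffun T -> k}) :
  cv (cv a b) c = cv a (cv b c).
Proof.
apply/ffunP => g; rewrite !cvE.
under eq_bigr do rewrite cvE big_distrl /=.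
rewrite exchange_big /=; apply: eq_bigr => y _.
rewrite cvE big_distrr /= (reindex_inj (mulgI y)) /=.
apply: eq_bigr => z _; rewrite mulKg invMg -mulgA mulrA.
by [].
Qed.

Lemma cv1l (T : finGroupType) (a : {ffun T -> k}) : cv (dl 1%g) a = a.
Proof.
apply/ffunP => g; rewrite cvE.
under eq_bigr do rewrite dlE.
by rewrite sum_dl invg1 mul1g.
Qed.

Lemma cv1r (T : finGroupType) (a : {ffun T -> k}) : cv a (dl 1%g) = a.
Proof.
apply/ffunP => g; rewrite cvE.
under eq_bigr do rewrite dlE.
rewrite (eq_bigr (fun x => a x * (x == g)%:R)); first by rewrite sum_dl'.
by move=> x _; rewrite -eq_mulVg1.
Qed.

Lemma cv_dl (T : finGroupType) (s t : T) : cv (dl s) (dl t) = dl (s * t)%g.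
Proof.
apply/ffunP => g; rewrite cvE.
under eq_bigr do rewrite dlE.
rewrite sum_dl !dlE; congr (_%:R).
by rewrite -(inj_eq (mulgI s)) mulKVg.
Qed.

Lemma lin_dl (S T : finType) (F : S -> {ffun T -> k}) s : lin F (dl s) = F s.
Proof.
apply/ffunP => t; rewrite ffunE.
under eq_bigr do rewrite dlE.
by rewrite sum_dl.
Qed.

Lemma lin_id (T : finType) (a : {ffun T -> k}) : lin (@dl T) a = a.
Proof.
apply/ffunP => t; rewrite ffunE.
under eq_bigr do rewrite dlE.
rewrite (eq_bigr (fun s => (s == t)%:R * a s)); first by rewrite sum_dl.
by move=> s _; rewrite mulrC eq_sym.
Qed.

Lemma eq_lin (S T : finType) (F F' : S -> {ffun T -> k}) a :
  F =1 F' -> lin F a = lin F' a.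
Proof. by move=> E; apply/ffunP => t; rewrite !ffunE; apply: eq_bigr => s _; rewrite E. Qed.

Lemma lin_comp (S T U : finType) (F : S -> {ffun T -> k}) (G : T -> {ffun U -> k}) a :
  lin G (lin F a) = lin (fun s => lin G (F s)) a.
Proof.
apply/ffunP => u; rewrite !ffunE.
under eq_bigr do rewrite ffunE big_distrl /=.
rewrite exchange_big /=; apply: eq_bigr => s _; rewrite ffunE big_distrr /=.
by apply: eq_bigr => t _; rewrite mulrA.
Qed.

Lemma cv_linl (S : finType) (T : finGroupType) (C : {ffun T -> k}) (F : S -> {ffun T -> k}) a :
  cv C (lin F a) = lin (fun s => cv C (F s)) a.
Proof.
apply/ffunP => t; rewrite cvE ffunE.
under eq_bigr do rewrite ffunE big_distrr /=.
rewrite exchange_big /=; apply: eq_bigr => s _; rewrite cvE big_distrr /=.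
by apply: eq_bigr => x _; rewrite mulrCA.
Qed.

Lemma cv_linr (S : finType) (T : finGroupType) (C : {ffun T -> k}) (F : S -> {ffun T -> k}) a :
  cv (lin F a) C = lin (fun s => cv (F s) C) a.
Proof.
apply/ffunP => t; rewrite cvE ffunE.
under eq_bigr do rewrite ffunE big_distrl /=.
rewrite exchange_big /=; apply: eq_bigr => s _; rewrite cvE big_distrr /=.
by apply: eq_bigr => x _; rewrite mulrA.
Qed.

Lemma eqLR (T : finGroupType) (x y g : T) : (g == (x * y)%g) = (y == (x^-1 * g)%g).
Proof. by apply/eqP/eqP => [->|->]; rewrite ?mulKg ?mulKVg. Qed.

Lemma lin_mul (S T : finGroupType) (F : S -> {ffun T -> k}) :
  (forall s s', F (s * s')%g = cv (F s) (F s')) ->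
  forall a b, lin F (cv a b) = cv (lin F a) (lin F b).
Proof.
move=> FM a b.
have -> : cv a b = lin (fun x => lin (fun y => dl (x * y)%g) b) a.
  apply/ffunP => g; rewrite cvE ffunE; apply: eq_bigr => x _.
  rewrite ffunE; congr (_ * _).
  under eq_bigr do rewrite dlE.
  under eq_bigr => y _ do rewrite (eqLR x y g).
  by rewrite sum_dl'.
rewrite lin_comp cv_linr; apply: eq_lin => x.
rewrite lin_comp cv_linl; apply: eq_lin => y.
by rewrite lin_dl FM.
Qed.

Definition epsf (T : finType) (a : {ffun T -> k}) := \sum_t a t.

Lemma eps_dl (T : finType) (s : T) : epsf (dl s) = 1.
Proof. rewrite /epsf; under eq_bigr do rewrite dlE; rewrite (bigD1 s) //= eqxx big1 ?addr0 // => t /negbTE -> //. Qed.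

Lemma eps_lin (S T : finType) (F : S -> {ffun T -> k}) a :
  epsf (lin F a) = \sum_s a s * epsf (F s).
Proof.
rewrite /epsf; under eq_bigr do rewrite ffunE.
rewrite exchange_big /=; apply: eq_bigr => s _; by rewrite big_distrr.
Qed.

Lemma eps_cv (T : finGroupType) (a b : {ffun T -> k}) : epsf (cv a b) = epsf a * epsf b.
Proof.
rewrite /epsf; under eq_bigr do rewrite cvE.
rewrite exchange_big big_distrl /=; apply: eq_bigr => x _.
rewrite -big_distrr /=; congr (_ * _).
by rewrite (reindex_inj (mulgI x)) /=; apply: eq_bigr => y _; rewrite mulKg.
Qed.

End Gen.

Set Implicit Arguments. Unset Strict Implicit. Unset Printing Implicit Defensive.
Import GRing.Theory.
Local Open Scope ring_scope.

Section Pairs.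
Variable k : fieldType.
Local Notation ff T := {ffun T -> k}.

Lemma lin_inj (S T : finType) (s : S -> T) (t : T -> S) (X : ff S) q :
  cancel s t -> lin (fun p => dl k (s p)) X q = if s (t q) == q then X (t q) else 0.
Proof.
move=> st; rewrite ffunE.
under eq_bigr => p _ do rewrite dlE.
case: eqP => [E|NE].
  rewrite (eq_bigr (fun p => X p * (p == t q)%:R)) ?sum_dl' // => p _.
  have -> : (q == s p) = (p == t q).
    apply/idP/idP => /eqP H; apply/eqP; first by rewrite H st.
    by rewrite H E.
  by [].
rewrite big1 // => p _; case: eqP => [E|]; last by rewrite mulr0.
by case: NE; rewrite E st.
Qed.

Lemma lin_bij (S T : finType) (s : S -> T) (t : T -> S) (X : ff S) :
  cancel s t -> cancel t s -> lin (fun p => dl k (s p)) X = [ffun q => X (t q)].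
Proof. by move=> st ts; apply/ffunP => q; rewrite (lin_inj _ _ st) ts eqxx ffunE. Qed.

Lemma lin_push (S T : finType) (s : S -> T) (X : ff S) q :
  lin (fun p => dl k (s p)) X q = \sum_(p | s p == q) X p.
Proof.
rewrite ffunE [RHS]big_mkcond /=; apply: eq_bigr => p _.
by rewrite dlE eq_sym; case: eqP; rewrite ?mulr1 ?mulr0.
Qed.

Lemma lin_hom (S T : finGroupType) (s : S -> T) :
  {morph s : x y / (x * y)%g} ->
  forall a b : ff S, lin (fun p => dl k (s p)) (cv a b) =
     cv (lin (fun p => dl k (s p)) a) (lin (fun p => dl k (s p)) b).
Proof. by move=> sM; apply: lin_mul => x y; rewrite sM cv_dl. Qed.

Lemma lin_dl1 (S T : finGroupType) (s : S -> T) :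
  s 1%g = 1%g -> lin (fun p => dl k (s p)) (dl k 1%g) = dl k 1%g.
Proof. by move=> s1; rewrite lin_dl s1. Qed.

Variable gT : finGroupType.

Lemma sum_pair (A B : finType) (F : A * B -> k) :
  \sum_(x : A * B) F x = \sum_a \sum_b F (a, b).
Proof. by rewrite pair_bigA; apply: eq_bigr => -[]. Qed.

Lemma cvE2 (X Y : ff (gT * gT)) p :
  cv X Y p = \sum_x1 \sum_x2 X (x1, x2) * Y ((x1^-1 * p.1)%g, (x2^-1 * p.2)%g).
Proof. by rewrite cvE pair_bigA; apply: eq_bigr => -[x1 x2] _. Qed.

Lemma tens_mul (a b c d : ff gT) :
  cv (tens a b) (tens c d) = tens (cv a c) (cv b d).
Proof.
apply/ffunP => -[p1 p2]; rewrite cvE2 ffunE !cvE big_distrlr.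
apply: eq_bigr => x1 _; apply: eq_bigr => x2 _; rewrite !ffunE /=.
by rewrite mulrACA.
Qed.

Lemma tens_dl (s t : gT) : tens (dl k s) (dl k t) = dl k (s, t).
Proof.
apply/ffunP => -[p1 p2]; rewrite !ffunE /= xpair_eqE.
by case: (p1 == s); case: (p2 == t); rewrite ?mulr1 ?mulr0.
Qed.

Lemma DeltaL (a : ff gT) : Delta a = lin (fun g => dl k (g, g)) a.
Proof.
apply/ffunP => -[p1 p2]; rewrite (@lin_inj _ _ _ fst) //= ffunE /=.
by rewrite xpair_eqE eqxx /= eq_sym.
Qed.

Lemma Delta_mul (a b : ff gT) : Delta (cv a b) = cv (Delta a) (Delta b).
Proof. by rewrite !DeltaL; apply: lin_mul => x y; rewrite cv_dl. Qed.

Lemma Delta_dl (s : gT) : Delta (dl k s) = dl k (s, s).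
Proof. by rewrite DeltaL lin_dl. Qed.

Lemma Delta1 : Delta (dl k (1%g : gT)) = dl k (1%g : gT * gT).
Proof. by rewrite Delta_dl. Qed.

Lemma flipL (X : ff (gT * gT)) : flip X = lin (fun p => dl k (p.2, p.1)) X.
Proof.
apply/ffunP => -[p1 p2].
rewrite (@lin_inj _ _ (fun p : gT * gT => (p.2, p.1)) (fun p => (p.2, p.1))) //=; last by case.
by rewrite eqxx ffunE.
Qed.

Lemma flip_mul (X Y : ff (gT * gT)) : flip (cv X Y) = cv (flip X) (flip Y).
Proof. by rewrite !flipL; apply: lin_mul => x y; rewrite cv_dl. Qed.

Lemma flip1 : flip (dl k (1%g : gT * gT)) = dl k (1%g : gT * gT).
Proof. by rewrite flipL lin_dl. Qed.

Lemma flip_tens (a b : ff gT) : flip (tens a b) = tens b a.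
Proof. by apply/ffunP => q; rewrite !ffunE mulrC. Qed.

Lemma flipK (X : ff (gT * gT)) : flip (flip X) = X.
Proof. by apply/ffunP => -[p1 p2]; rewrite !ffunE. Qed.

Definition tens21 (X : ff (gT * gT)) (b : ff gT) : ff (gT * gT * gT) :=
  [ffun t => X t.1 * b t.2].
Definition tens12 (a : ff gT) (X : ff (gT * gT)) : ff (gT * gT * gT) :=
  [ffun t => a t.1.1 * X (t.1.2, t.2)].

Lemma cvE3 (X Y : ff (gT * gT * gT)) p :
  cv X Y p = \sum_x \sum_z X (x, z) * Y ((x^-1 * p.1)%g, (z^-1 * p.2)%g).
Proof. by rewrite cvE pair_bigA; apply: eq_bigr => -[x1 x2] _. Qed.

Lemma tens21_mul (X Y : ff (gT * gT)) (b c : ff gT) : cv (tens21 X b) (tens21 Y c) = tens21 (cv X Y) (cv b c).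
Proof.
apply/ffunP => -[p1 p2]; rewrite cvE3 ffunE !cvE big_distrlr.
apply: eq_bigr => x1 _; apply: eq_bigr => x2 _; rewrite !ffunE /=.
by rewrite mulrACA.
Qed.

Lemma tens12_mul (a b : ff gT) (X Y : ff (gT * gT)) : cv (tens12 a X) (tens12 b Y) = tens12 (cv a b) (cv X Y).
Proof.
apply/ffunP => -[[p1 p2] p3]; rewrite cvE ffunE !cvE big_distrlr /=.
rewrite sum_pair; under eq_bigr do rewrite sum_pair.
rewrite [LHS]sum_pair; apply: eq_bigr => x1 _; apply: eq_bigr => x2 _; apply: eq_bigr => x3 _.
by rewrite !ffunE /= mulrACA.
Qed.

Lemma tens21_dl (s : gT * gT) (t : gT) : tens21 (dl k s) (dl k t) = dl k (s, t).
Proof.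
apply/ffunP => -[p1 p2]; rewrite !ffunE /= xpair_eqE.
by case: (p1 == s); case: (p2 == t); rewrite ?mulr1 ?mulr0.
Qed.

Lemma tens12_dl (s : gT) (t : gT * gT) : tens12 (dl k s) (dl k t) = dl k ((s, t.1), t.2).
Proof.
case: t => t1 t2; apply/ffunP => -[[p1 p2] p3]; rewrite !ffunE /= !xpair_eqE.
by case: (p1 == s); case: (p2 == t1); case: (p3 == t2); rewrite ?mulr1 ?mulr0.
Qed.

Lemma tens3_21_12 (a b c : ff gT) : tens21 (tens a b) c = tens12 a (tens b c).
Proof. by apply/ffunP => t; rewrite !ffunE /= mulrA. Qed.

Lemma Delta_idL (X : ff (gT * gT)) : Delta_id X = lin (fun p => dl k ((p.1, p.1), p.2)) X.
Proof.
apply/ffunP => -[[p1 p2] p3].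
rewrite (@lin_inj _ _ _ (fun t : gT * gT * gT => (t.1.1, t.2))) //=; last by case.
by rewrite ffunE /= !xpair_eqE !eqxx /= andbT eq_sym.
Qed.

Lemma id_DeltaL (X : ff (gT * gT)) : id_Delta X = lin (fun p => dl k ((p.1, p.2), p.2)) X.
Proof.
apply/ffunP => -[[p1 p2] p3].
rewrite (@lin_inj _ _ _ (fun t : gT * gT * gT => (t.1.1, t.1.2))) //=; last by case.
by rewrite ffunE /= !xpair_eqE !eqxx /=.
Qed.

Lemma tens_1L (X : ff (gT * gT)) : tens_1 X = lin (fun p => dl k ((p.1, p.2), 1%g)) X.
Proof.
apply/ffunP => -[[p1 p2] p3].
rewrite (@lin_inj _ _ _ (fun t : gT * gT * gT => (t.1.1, t.1.2))) //=; last by case.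
by rewrite ffunE /= !xpair_eqE !eqxx /= eq_sym.
Qed.

Lemma one_tensL (X : ff (gT * gT)) : one_tens X = lin (fun p => dl k ((1%g, p.1), p.2)) X.
Proof.
apply/ffunP => -[[p1 p2] p3].
rewrite (@lin_inj _ _ _ (fun t : gT * gT * gT => (t.1.2, t.2))) //=; last by case.
by rewrite ffunE /= !xpair_eqE !eqxx /= !andbT eq_sym.
Qed.

Lemma Delta_id_mul (X Y : ff (gT * gT)) : Delta_id (cv X Y) = cv (Delta_id X) (Delta_id Y).
Proof. by rewrite !Delta_idL; apply: lin_mul => x y; rewrite cv_dl. Qed.
Lemma id_Delta_mul (X Y : ff (gT * gT)) : id_Delta (cv X Y) = cv (id_Delta X) (id_Delta Y).
Proof. by rewrite !id_DeltaL; apply: lin_mul => x y; rewrite cv_dl. Qed.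
Lemma tens_1_mul (X Y : ff (gT * gT)) : tens_1 (cv X Y) = cv (tens_1 X) (tens_1 Y).
Proof. rewrite !tens_1L; apply: lin_mul => x y; rewrite cv_dl; congr (dl k _).
change (((x.1 * y.1, x.2 * y.2), 1 : gT) = ((x.1 * y.1, x.2 * y.2), 1 * 1 : gT))%g.
by rewrite mulg1. Qed.
Lemma one_tens_mul (X Y : ff (gT * gT)) : one_tens (cv X Y) = cv (one_tens X) (one_tens Y).
Proof. rewrite !one_tensL; apply: lin_mul => x y; rewrite cv_dl; congr (dl k _).
change (((1 : gT, x.1 * y.1), x.2 * y.2) = ((1 * 1 : gT, x.1 * y.1), x.2 * y.2))%g.
by rewrite mulg1. Qed.

Lemma tens_1E (X : ff (gT * gT)) : tens_1 X = tens21 X (dl k 1%g).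
Proof. by apply/ffunP => -[[p1 p2] p3]; rewrite !ffunE /=; case: eqP; rewrite ?mulr1 ?mulr0. Qed.
Lemma one_tensE (X : ff (gT * gT)) : one_tens X = tens12 (dl k 1%g) X.
Proof. by apply/ffunP => -[[p1 p2] p3]; rewrite !ffunE /=; case: eqP; rewrite ?mul1r ?mul0r. Qed.
Lemma Delta_id_tens (a b : ff gT) : Delta_id (tens a b) = tens21 (Delta a) b.
Proof. by apply/ffunP => -[[p1 p2] p3]; rewrite !ffunE /=; case: eqP; rewrite ?mul0r //= => ->. Qed.
Lemma id_Delta_tens (a b : ff gT) : id_Delta (tens a b) = tens12 a (Delta b).
Proof. by apply/ffunP => -[[p1 p2] p3]; rewrite !ffunE /=; case: eqP; rewrite ?mulr0 //= => ->. Qed.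

Lemma sum_fst (A B : finType) (F : A * B -> k) g :
  \sum_(p | p.1 == g) F p = \sum_b F (g, b).
Proof.
rewrite big_mkcond sum_pair (bigD1 g) //= [X in _ + X]big1 ?addr0.
  by apply: eq_bigr => b _; rewrite eqxx.
by move=> a /negbTE na; apply: big1 => b _; rewrite na.
Qed.

Lemma sum_snd (A B : finType) (F : A * B -> k) g :
  \sum_(p | p.2 == g) F p = \sum_a F (a, g).
Proof.
rewrite big_mkcond sum_pair; apply: eq_bigr => a _.
rewrite (bigD1 g) //= eqxx big1 ?addr0 //.
by move=> b /negbTE nb; rewrite nb.
Qed.

Lemma id_epsL (X : ff (gT * gT)) : id_eps X = lin (fun p => dl k p.1) X.
Proof. by apply/ffunP => g; rewrite lin_push ffunE sum_fst. Qed.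

Lemma eps_idL (X : ff (gT * gT)) : eps_id X = lin (fun p => dl k p.2) X.
Proof. by apply/ffunP => g; rewrite lin_push ffunE sum_snd. Qed.

Lemma id_eps_mul (X Y : ff (gT * gT)) : id_eps (cv X Y) = cv (id_eps X) (id_eps Y).
Proof. by rewrite !id_epsL; apply: lin_mul => x y; rewrite cv_dl. Qed.

Lemma eps_id_mul (X Y : ff (gT * gT)) : eps_id (cv X Y) = cv (eps_id X) (eps_id Y).
Proof. by rewrite !eps_idL; apply: lin_mul => x y; rewrite cv_dl. Qed.

Lemma id_eps_tens (a b : ff gT) : epsf b = 1 -> id_eps (tens a b) = a.
Proof.
move=> eb; apply/ffunP => g; rewrite !ffunE -[RHS]mulr1 -eb /epsf big_distrr /=.
by apply: eq_bigr => h _; rewrite ffunE.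
Qed.

Lemma id_eps1 : id_eps (dl k (1%g : gT * gT)) = dl k 1%g.
Proof. by rewrite id_epsL lin_dl. Qed.

Lemma lin_const (S : finType) (c : ff gT) (a : ff S) : epsf a = 1 -> lin (fun _ => c) a = c.
Proof. by move=> ea; apply/ffunP => t; rewrite !ffunE -[RHS]mul1r -ea /epsf big_distrl. Qed.

Definition muf (X : ff (gT * gT)) : ff gT := lin (fun p => dl k (p.1 * p.2^-1)%g) X.

Lemma antipodeE (a : ff gT) g : antipode a g = a (g^-1)%g.
Proof. by rewrite ffunE. Qed.

Lemma antipode_cv (a b : ff gT) : antipode (cv a b) = cv (antipode b) (antipode a).
Proof.
apply/ffunP => g; rewrite antipodeE !cvE (reindex_inj (mulgI (g^-1)%g)) /=.
apply: eq_bigr => x _; rewrite !antipodeE mulrC; congr (_ * _).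
  by rewrite invMg invgK mulgK.
by rewrite invMg invgK.
Qed.

Lemma antipode_dl (s : gT) : antipode (dl k s) = dl k (s^-1)%g.
Proof. by apply/ffunP => g; rewrite antipodeE !dlE -(inj_eq invg_inj) invgK. Qed.

Lemma mu_tens (a b : ff gT) : muf (tens a b) = cv a (antipode b).
Proof.
apply/ffunP => h; rewrite /muf lin_push cvE big_mkcond sum_pair.
apply: eq_bigr => x _; rewrite antipodeE.
rewrite (bigD1 (h^-1 * x)%g) //= big1 ?addr0.
  rewrite ffunE /= invMg invgK mulKVg eqxx; congr (_ * b _).
  by rewrite invMg invgK.
move=> y ny; case: eqP => // E; case/eqP: ny.
by rewrite -E invMg invgK mulgKV.
Qed.

Lemma mu_Delta (a : ff gT) : epsf a = 1 -> muf (Delta a) = dl k 1%g.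
Proof.
move=> ea; rewrite /muf DeltaL lin_comp -(lin_const (dl k 1%g) ea); apply: eq_lin => g.
by rewrite lin_dl mulgV.
Qed.

Lemma cv_Delta_E (y : ff gT) (X : ff (gT * gT)) p q :
  cv (Delta y) X (p, q) = \sum_g y g * X ((g^-1 * p)%g, (g^-1 * q)%g).
Proof.
rewrite cvE2; apply: eq_bigr => g _.
rewrite (bigD1 g) //= big1 ?addr0; first by rewrite ffunE /= eqxx.
by move=> h nh; rewrite ffunE /= eq_sym (negbTE nh) mul0r.
Qed.

End Pairs.

Set Implicit Arguments. Unset Strict Implicit. Unset Printing Implicit Defensive.
Import GRing.Theory.
Local Open Scope ring_scope.

Section More.
Variables (k : fieldType) (T : finGroupType).
Local Notation ff T := {ffun T -> k}.

Lemma mu_tensl (a b : ff T) (X : ff (T * T)) :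
  muf (cv (tens a b) X) = cv (cv a (muf X)) (antipode b).
Proof.
rewrite -[X in LHS]lin_id cv_linl /muf lin_comp cv_linl cv_linr.
apply: eq_lin => -[p1 p2]; rewrite -/(muf _) -tens_dl tens_mul mu_tens /=.
by rewrite antipode_cv antipode_dl !cvA -(cvA (dl k p1)) cv_dl.
Qed.

Lemma dl_inj (s t : T) : dl k s = dl k t -> s = t.
Proof.
move/(congr1 (fun a : ff T => a s)); rewrite !dlE eqxx.
by case: eqP => // _ /eqP; rewrite oner_eq0.
Qed.

Lemma grouplike (u : ff T) : Delta u = tens u u -> epsf u = 1 -> exists h, u = dl k h.
Proof.
move=> Du eu.
have uu p : u p = u p * u p.
  by have := congr1 (fun X : ff (T * T) => X (p, p)) Du; rewrite !ffunE /= eqxx.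
have u0 p q : p != q -> u p * u q = 0.
  move=> npq; have := congr1 (fun X : ff (T * T) => X (p, q)) Du.
  by rewrite !ffunE /= (negbTE npq).
have [p up] : exists p, u p != 0.
  apply/existsP; apply: contraT; rewrite negb_exists => /forallP H.
  move: eu; rewrite /epsf big1 => [/eqP|q _]; first by rewrite eq_sym oner_eq0.
  by apply/eqP; have := H q; rewrite negbK.
have u1 : u p = 1.
  by apply: (mulIf up); rewrite mul1r -uu.
exists p; apply/ffunP => q; rewrite dlE.
case: eqP => [->|/eqP nq] //.
have := u0 p q; rewrite eq_sym => /(_ nq); rewrite u1 mul1r.
by [].
Qed.

Local Notation n := #|T|.
Definition Mat (a : ff T) : 'M[k]_n :=
  \matrix_(i, j) a ((enum_val i) * (enum_val j)^-1)%g.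

Lemma sum_ordT (G : T -> k) : \sum_(i < n) G (enum_val i) = \sum_h G h.
Proof.
rewrite (reindex enum_rank (onW_bij _ (@enum_rank_bij T))) /=.
by apply: eq_bigr => h _; rewrite enum_rankK.
Qed.

Lemma Mat_mul (a b : ff T) : Mat (cv a b) = Mat a *m Mat b.
Proof.
apply/matrixP => i j; rewrite !mxE cvE.
under [RHS]eq_bigr do rewrite !mxE.
rewrite (sum_ordT (fun h => a (enum_val i * h^-1)%g * b (h * (enum_val j)^-1)%g)).
have inj : injective (fun h : T => (enum_val i * h^-1)%g).
  by move=> x y /mulgI /invg_inj.
rewrite (reindex_inj inj) /=; apply: eq_bigr => h _.
by rewrite invMg invgK !mulgA mulgKV.
Qed.

Lemma Mat1 : Mat (dl k 1%g) = 1%:M.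
Proof.
apply/matrixP => i j; rewrite !mxE dlE -eq_mulgV1.
by rewrite (inj_eq enum_val_inj).
Qed.

Lemma Mat_inj (a b : ff T) : Mat a = Mat b -> a = b.
Proof.
move=> E; apply/ffunP => g.
have := congr1 (fun A : 'M[k]_n => A (enum_rank g) (enum_rank 1%g)) E.
by rewrite !mxE !enum_rankK invg1 mulg1.
Qed.

Lemma cv_comm1 (a b : ff T) : cv a b = dl k 1%g -> cv b a = dl k 1%g.
Proof.
move=> ab; apply: Mat_inj; rewrite Mat_mul Mat1; apply: mulmx1C.
by rewrite -Mat_mul ab Mat1.
Qed.

End More.

Set Implicit Arguments. Unset Strict Implicit. Unset Printing Implicit Defensive.
Import GRing.Theory.
Local Open Scope ring_scope.

Lemma eigenvalue_closed' {C : closedFieldType} n (A : 'M[C]_n) : (n > 0)%N ->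
  exists a, eigenvalue A a.
Proof.
move=> n_gt0; have /closed_rootP [a rAa] : size (char_poly A) != 1%N.
  by rewrite size_char_poly; case: (n) n_gt0.
by exists a; rewrite eigenvalue_root_char.
Qed.

Lemma common_eigenvector' {C : closedFieldType} n (As : seq 'M[C]_n) :
  (n > 0)%N -> {in As &, forall A B, comm_mx A B} ->
  exists2 v : 'rV_n, v != 0 & all (fun A => stablemx v A) As.
Proof.
move=> n_gt0 /all_comm_mxP; have [k sAsk] := ubnP (size As).
elim: k n n_gt0 As sAsk => [//|k IHk]  n n_gt0 [|A As].
  exists (const_mx 1) => //; apply/negP => /eqP/rowP/(_ (Ordinal n_gt0)).
  by rewrite !mxE => /eqP; rewrite oner_eq0.
rewrite ltnS all_comm_mx_cons => sAsk /andP[].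
move=> /allP/(_ _ _)/eqP/= A_comm /all_comm_mxP As_comm.
have [a a_eigen] := eigenvalue_closed' A n_gt0.
have [] := IHk _ _ [seq restrictmx (eigenspace A a) B | B <- As].
- by rewrite lt0n mxrank_eq0.
- by rewrite size_map.
- apply/all_comm_mxP; move=> _ _ /= /mapP /= [B B_in ->] /mapP /= [B' B'_in ->].
  rewrite -?conjmxM ?inE ?stablemx_row_base ?comm_mx_stable_eigenspace//;
  by [rewrite As_comm | apply: As_comm | apply: A_comm].
move=> v vN0 /allP /= vP; exists (v *m (row_base (eigenspace A a))).
  by rewrite mulmx_free_eq0 ?row_base_free.
apply/andP; split.
  by apply/eigenvectorP; exists a; rewrite mulmx_sub // eq_row_base.
apply/allP => B B_in; rewrite -stablemx_restrict ?vP //.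
  by apply/mapP; exists B.
by rewrite comm_mx_stable_eigenspace //; exact: A_comm.
Qed.

Section Eig.
Variables (k : closedFieldType) (hT : finGroupType).
Local Notation ff T := {ffun T -> k}.
Variable M : ff (hT * hT).
Hypothesis Msym : flip M = M.
Hypothesis Meps : id_eps M = dl k 1%g.
Hypothesis Mcoc : cv (Delta_id M) (tens_1 M) = cv (id_Delta M) (one_tens M).

Lemma sum_pick (T : finType) (s : T) (G : T -> k) :
  \sum_t (if t == s then G t else 0) = G s.
Proof. by rewrite -big_mkcond big_pred1_eq. Qed.

Definition EE a b c := \sum_s M (s, c) * M ((s^-1 * a)%g, (s^-1 * b)%g).

Lemma EE_l a b c : cv (Delta_id M) (tens_1 M) ((a, b), c) = EE a b c.
Proof.
rewrite cvE sum_pair sum_pair; apply: eq_bigr => x1 _.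
rewrite (bigD1 x1) //= [X in _ + X]big1 ?addr0; last first.
  by move=> x2 nx; apply: big1 => z _; rewrite ffunE /= eq_sym (negbTE nx) mul0r.
rewrite (bigD1 c) //= [X in _ + X]big1 ?addr0; last first.
  move=> z nz; rewrite !ffunE /=.
  by rewrite -eq_mulVg1 (negbTE nz) mulr0.
by rewrite !ffunE /= eqxx mulVg eqxx.
Qed.

Lemma EE_r a b c : cv (id_Delta M) (one_tens M) ((a, b), c) =
  \sum_s M (a, s) * M ((s^-1 * b)%g, (s^-1 * c)%g).
Proof.
rewrite cvE sum_pair sum_pair (bigD1 a) //= [X in _ + X]big1 ?addr0; last first.
  move=> x1 nx; apply: big1 => x2 _; apply: big1 => z _; rewrite !ffunE /=.
  by rewrite -eq_mulVg1 eq_sym (negbTE nx) !mulr0.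
apply: eq_bigr => x2 _.
rewrite (bigD1 x2) //= [X in _ + X]big1 ?addr0; last first.
  by move=> z nz; rewrite !ffunE /= eq_sym (negbTE nz) mul0r.
by rewrite !ffunE /= !eqxx mulVg; case: eqP.
Qed.

Lemma Msym' p q : M (p, q) = M (q, p).
Proof. by rewrite -[in LHS]Msym ffunE. Qed.

Lemma EE_sym a b c : EE a b c = EE a c b.
Proof.
rewrite -EE_l Mcoc EE_r -[EE a c b]EE_l Mcoc EE_r.
by apply: eq_bigr => s _; congr (_ * _); apply: Msym'.
Qed.

Local Notation n := #|hT|.
Definition gi (i : 'I_n) : hT := enum_val i.

Definition Tm (q : hT) : 'M[k]_n :=
  \matrix_(i, j) M (((gi i)^-1 * gi j)%g, ((gi i)^-1 * q)%g).

Lemma sum_ord (G : hT -> k) : \sum_(i < n) G (gi i) = \sum_h G h.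
Proof.
rewrite (reindex enum_rank (onW_bij _ (@enum_rank_bij hT))) /=.
by apply: eq_bigr => h _; rewrite /gi enum_rankK.
Qed.

Lemma Tm_comm q r : Tm q *m Tm r = Tm r *m Tm q.
Proof.
apply/matrixP => i j; rewrite !mxE.
under eq_bigr do rewrite !mxE.
under [RHS]eq_bigr do rewrite !mxE.
rewrite (sum_ord (fun h => M (((gi i)^-1 * h)%g, ((gi i)^-1 * q)%g) *
            M ((h^-1 * gi j)%g, (h^-1 * r)%g))).
rewrite (sum_ord (fun h => M (((gi i)^-1 * h)%g, ((gi i)^-1 * r)%g) *
            M ((h^-1 * gi j)%g, (h^-1 * q)%g))).
rewrite (reindex_inj (mulgI (gi i))) [RHS](reindex_inj (mulgI (gi i))) /=.
have := EE_sym ((gi i)^-1 * gi j)%g ((gi i)^-1 * r)%g ((gi i)^-1 * q)%g.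
rewrite /EE => E.
transitivity (\sum_s M (s, ((gi i)^-1 * q)%g) * M ((s^-1 * ((gi i)^-1 * gi j))%g, (s^-1 * ((gi i)^-1 * r))%g)).
  by apply: eq_bigr => s _; rewrite mulKg invMg !mulgA.
rewrite E; apply: eq_bigr => s _; by rewrite mulKg invMg !mulgA.
Qed.

Lemma exists_char : exists y : ff hT, cv (Delta y) M = tens y y /\ epsf y = 1.
Proof.
have n_gt0 : (0 < n)%N by apply/card_gt0P; exists 1%g.
have [v v0 /allP vP] := @common_eigenvector' k n [seq Tm q | q <- enum hT] n_gt0
  (fun A B (hA : A \in _) (hB : B \in _) => ltac:(
     case/mapP: hA => q _ ->; case/mapP: hB => r _ ->; exact: Tm_comm)).
have lam : forall q, exists l, v *m Tm q = l *: v.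
  move=> q; apply/sub_rVP; apply: vP; apply/mapP; exists q => //.
  by rewrite mem_enum.
have [l lP] := fin_all_exists lam.
pose y0 : ff hT := [ffun g => v 0 (enum_rank g)].
have key p q : \sum_h y0 h * M ((h^-1 * p)%g, (h^-1 * q)%g) = l q * y0 p.
  have := congr1 (fun w : 'rV_n => w 0 (enum_rank p)) (lP q).
  rewrite /= !mxE ffunE => <-.
  rewrite -(sum_ord (fun h => y0 h * M ((h^-1 * p)%g, (h^-1 * q)%g))).
  apply: eq_bigr => i _; rewrite !mxE ffunE /gi enum_valK enum_rankK.
  by [].
have sumq p : \sum_q l q * y0 p = y0 p.
  under eq_bigr do rewrite -key.
  rewrite exchange_big /=.
  transitivity (\sum_h y0 h * id_eps M (h^-1 * p)%g).
    apply: eq_bigr => h _; rewrite -big_distrr ffunE /=; congr (_ * _).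
    rewrite [RHS]ffunE [LHS](reindex_inj (mulgI h)).
    by apply: eq_bigr => q _; rewrite mulKg.
  rewrite Meps; under eq_bigr do rewrite dlE -eq_mulVg1.
  by rewrite sum_dl'.
have symk p q : l q * y0 p = l p * y0 q.
  rewrite -key -key; apply: eq_bigr => h _; congr (_ * _); apply: Msym'.
pose s := \sum_q y0 q.
have y0E p : y0 p = l p * s.
  by rewrite -sumq /s big_distrr /=; apply: eq_bigr => q _; rewrite symk.
have s0 : s != 0.
  apply: contra v0 => /eqP s0; apply/eqP/rowP => i; rewrite mxE.
  have := y0E (enum_val i); rewrite s0 mulr0 ffunE enum_valK.
  by [].
have sumL : \sum_p l p = 1.
  apply: (mulIf s0); rewrite mul1r big_distrl /=.
  by rewrite {2}/s; apply: eq_bigr => p _; rewrite y0E.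
exists [ffun p => l p]; split; last first.
  by rewrite /epsf; under eq_bigr do rewrite ffunE.
apply/ffunP => -[p q]; rewrite cv_Delta_E !ffunE /=.
apply: (mulIf s0).
have := key p q; rewrite y0E => E.
transitivity (l q * (l p * s)); last by rewrite mulrA (mulrC (l q)).
rewrite -E big_distrl /=; apply: eq_bigr => h _.
by rewrite ffunE y0E mulrAC.
Qed.

End Eig.

Set Implicit Arguments. Unset Strict Implicit. Unset Printing Implicit Defensive.
Import GRing.Theory.
Local Open Scope ring_scope.

Section Canc.
Variables (k : fieldType) (T : finGroupType).
Local Notation ff T := {ffun T -> k}.
Lemma cancL (a b c : ff T) : cv a b = dl k 1%g -> cv a (cv b c) = c.
Proof. by move=> ab; rewrite -cvA ab cv1l. Qed.
Lemma cancR (a b c : ff T) : cv a b = dl k 1%g -> cv (cv c a) b = c.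
Proof. by move=> ab; rewrite cvA ab cv1r. Qed.
Lemma inv_uniq (a b b' : ff T) : cv a b = dl k 1%g -> cv b' a = dl k 1%g -> b = b'.
Proof. by move=> ab ba; rewrite -[b]cv1l -ba cvA ab cv1r. Qed.
End Canc.

Section Main.
Variables (k : closedFieldType) (gT hT : finGroupType).
Local Notation ff T := {ffun T -> k}.
Variables (J Ji : ff (gT * gT)) (J' Ji' : ff (hT * hT)) (F : gT -> ff hT).
Hypothesis cocJ : cv (Delta_id J) (tens_1 J) = cv (id_Delta J) (one_tens J).
Hypothesis epsJ : id_eps J = dl k 1%g.
Hypothesis JJi : cv J Ji = dl k 1%g.
Hypothesis JiJ : cv Ji J = dl k 1%g.
Hypothesis cocJ' : cv (Delta_id J') (tens_1 J') = cv (id_Delta J') (one_tens J').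
Hypothesis epsJ' : id_eps J' = dl k 1%g.
Hypothesis J'Ji' : cv J' Ji' = dl k 1%g.
Hypothesis Ji'J' : cv Ji' J' = dl k 1%g.
Hypothesis f_mul : forall a b, lin F (cv a b) = cv (lin F a) (lin F b).
Hypothesis f_1 : lin F (dl k 1%g) = dl k 1%g.
Hypothesis f_eps : forall a, epsf (lin F a) = epsf a.
Hypothesis f_Delta : forall a, applyL2 F (DeltaJ J Ji a) = DeltaJ J' Ji' (lin F a).
Hypothesis f_R : applyL2 F (Rmat J Ji) = Rmat J' Ji'.
Hypothesis f_bij : bijective (lin F).

Lemma F_mul g h : F (g * h)%g = cv (F g) (F h).
Proof. by rewrite -!(lin_dl F) -cv_dl f_mul. Qed.
Lemma F1 : F 1%g = dl k 1%g.
Proof. by rewrite -f_1 lin_dl. Qed.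
Lemma F_eps g : epsf (F g) = 1.
Proof. by rewrite -(lin_dl F) f_eps eps_dl. Qed.

Definition F2 (p : gT * gT) := tens (F p.1) (F p.2).
Lemma A2L X : applyL2 F X = lin F2 X.
Proof. by apply/ffunP => q; rewrite !ffunE; apply: eq_bigr => p _; rewrite ffunE mulrA. Qed.
Lemma F2_mul s t : F2 (s * t)%g = cv (F2 s) (F2 t).
Proof. by rewrite /F2 tens_mul -!F_mul. Qed.
Lemma A2_mul X Y : lin F2 (cv X Y) = cv (lin F2 X) (lin F2 Y).
Proof. exact: (@lin_mul k (gT * gT)%type (hT * hT)%type F2 F2_mul). Qed.
Lemma A2_1 : lin F2 (dl k 1%g) = dl k 1%g.
Proof. by rewrite lin_dl /F2 /= F1 tens_dl. Qed.

Definition K := lin F2 J.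
Definition Ki := lin F2 Ji.
Lemma KKi : cv K Ki = dl k 1%g. Proof. by rewrite -A2_mul JJi A2_1. Qed.
Lemma KiK : cv Ki K = dl k 1%g. Proof. by rewrite -A2_mul JiJ A2_1. Qed.

Definition L := cv K Ji'.
Definition Li := cv J' Ki.
Lemma LLi : cv L Li = dl k 1%g.
Proof. by rewrite /L /Li cvA (cancL _ Ji'J') KKi. Qed.
Lemma LiL : cv Li L = dl k 1%g.
Proof. by rewrite /L /Li cvA (cancL _ KiK) J'Ji'. Qed.

Lemma DG g : Delta (F g) = cv (cv Li (tens (F g) (F g))) L.
Proof.
have := f_Delta (dl k g); rewrite A2L => E.
change (lin F2 (cv (cv Ji (Delta (dl k g))) J) = cv (cv Ji' (Delta (lin F (dl k g)))) J') in E.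
move: E; rewrite !A2_mul Delta_dl !lin_dl => E.
have -> : Delta (F g) = cv J' (cv (cv (cv Ji' (Delta (F g))) J') Ji').
  by rewrite (cancR _ J'Ji') (cancL _ J'Ji').
rewrite -E /Li /L /F2 /= !cvA.
by [].
Qed.

Lemma flip_A2 X : flip (lin F2 X) = lin F2 (flip X).
Proof.
rewrite !flipL !lin_comp; apply: eq_lin => p.
by rewrite lin_dl -flipL /F2 flip_tens.
Qed.

Lemma flipL_eq : flip L = L.
Proof.
have := f_R; rewrite A2L /Rmat.
change (lin F2 (cv (flip Ji) J) = cv (flip Ji') J' -> flip L = L).
rewrite A2_mul -flip_A2 -/K -/Ki => E.
have fKKi : cv (flip K) (flip Ki) = dl k 1%g by rewrite -flip_mul KKi flip1.
rewrite /L flip_mul; apply/esym.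
have E2 : K = cv (flip K) (cv (flip Ji') J') by rewrite -E cancL.
by rewrite {1}E2 cvA cancR.
Qed.

Lemma flipLi : flip Li = Li.
Proof.
have e1 : cv (flip Li) L = dl k 1%g by rewrite -[L in LHS]flipL_eq -flip_mul LiL flip1.
by apply/esym/(inv_uniq LLi).
Qed.

Lemma epsLi : id_eps Li = dl k 1%g.
Proof.
have eK : id_eps Ki = dl k 1%g.
  have -> : id_eps Ki = lin F (id_eps Ji).
    rewrite /Ki !id_epsL !lin_comp; apply: eq_lin => p.
    by rewrite lin_dl -id_epsL /F2 id_eps_tens ?F_eps.
  have -> : id_eps Ji = dl k 1%g.
    by rewrite -[id_eps Ji]cv1l -epsJ -id_eps_mul JJi id_eps1.
  exact: f_1.
by rewrite /Li id_eps_mul epsJ' eK cv1l.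
Qed.

Definition F3 (t : gT * gT * gT) := tens21 (tens (F t.1.1) (F t.1.2)) (F t.2).
Lemma F3_mul s t : F3 (s * t)%g = cv (F3 s) (F3 t).
Proof. by rewrite /F3 tens21_mul tens_mul -!F_mul. Qed.
Lemma A3_mul X Y : lin F3 (cv X Y) = cv (lin F3 X) (lin F3 Y).
Proof. exact: (@lin_mul k (gT * gT * gT)%type (hT * hT * hT)%type F3 F3_mul). Qed.

Lemma tens_1_1 : tens_1 (dl k (1%g : hT * hT)) = dl k 1%g.
Proof. by rewrite tens_1L lin_dl. Qed.
Lemma one_tens_1 : one_tens (dl k (1%g : hT * hT)) = dl k 1%g.
Proof. by rewrite one_tensL lin_dl. Qed.

Lemma DG' g : cv (cv L (Delta (F g))) Li = tens (F g) (F g).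
Proof.
have E : cv K (cv Ji' Li) = dl k 1%g by rewrite -cvA LLi.
by rewrite DG !cvA (cancL _ Ji'J') (cancL _ KKi) E cv1r.
Qed.

Lemma A3_Dl X : lin F3 (Delta_id X) = cv (cv (tens_1 L) (Delta_id (lin F2 X))) (tens_1 Li).
Proof.
rewrite [Delta_id X]Delta_idL [Delta_id (lin F2 X)]Delta_idL !lin_comp cv_linl cv_linr.
apply: eq_lin => p; rewrite lin_dl -Delta_idL /F2 Delta_id_tens !tens_1E !tens21_mul.
by rewrite DG' cv1l cv1r.
Qed.

Lemma A3_Dr X : lin F3 (id_Delta X) = cv (cv (one_tens L) (id_Delta (lin F2 X))) (one_tens Li).
Proof.
rewrite [id_Delta X]id_DeltaL [id_Delta (lin F2 X)]id_DeltaL !lin_comp cv_linl cv_linr.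
apply: eq_lin => p; rewrite lin_dl -id_DeltaL /F2 id_Delta_tens !one_tensE !tens12_mul.
by rewrite DG' cv1l cv1r /F3 /= tens3_21_12.
Qed.

Lemma A3_T1 X : lin F3 (tens_1 X) = tens_1 (lin F2 X).
Proof.
rewrite [tens_1 X]tens_1L [tens_1 (lin F2 X)]tens_1L !lin_comp.
by apply: eq_lin => p; rewrite !lin_dl -tens_1L tens_1E /F3 /= F1.
Qed.

Lemma A3_O1 X : lin F3 (one_tens X) = one_tens (lin F2 X).
Proof.
rewrite [one_tens X]one_tensL [one_tens (lin F2 X)]one_tensL !lin_comp.
by apply: eq_lin => p; rewrite !lin_dl -one_tensL one_tensE /F3 /= F1 tens3_21_12.
Qed.

Lemma LiK : cv Li K = J'.
Proof. by rewrite /Li cvA KiK cv1r. Qed.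

Lemma coc_Li : cv (Delta_id Li) (tens_1 Li) = cv (id_Delta Li) (one_tens Li).
Proof.
have H := congr1 (lin F3) cocJ.
rewrite !A3_mul A3_Dl A3_Dr A3_T1 A3_O1 -/K !cvA -tens_1_mul -one_tens_mul LiK in H.
have TLL : cv (tens_1 Li) (tens_1 L) = dl k 1%g by rewrite -tens_1_mul LiL tens_1_1.
have OLL : cv (one_tens Li) (one_tens L) = dl k 1%g by rewrite -one_tens_mul LiL one_tens_1.
have TLL' : cv (tens_1 L) (tens_1 Li) = dl k 1%g by rewrite -tens_1_mul LLi tens_1_1.
have DKK : cv (Delta_id K) (Delta_id Ki) = dl k 1%g.
  by rewrite -Delta_id_mul KKi Delta_idL lin_dl.
have TJJ : cv (tens_1 J') (tens_1 Ji') = dl k 1%g by rewrite -tens_1_mul J'Ji' tens_1_1.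
set X := cv (tens_1 L) (cv (Delta_id K) (tens_1 J')) in H.
set Xi := cv (tens_1 Ji') (cv (Delta_id Ki) (tens_1 Li)).
have XXi : cv X Xi = dl k 1%g.
  by rewrite /X /Xi !cvA (cancL _ TJJ) (cancL _ DKK) TLL'.
have P1 : cv (cv (Delta_id Li) (tens_1 Li)) X = cv (Delta_id J') (tens_1 J').
  by rewrite /X !cvA (cancL _ TLL) -cvA -Delta_id_mul LiK.
have Q1 : cv (cv (id_Delta Li) (one_tens Li)) X = cv (id_Delta J') (one_tens J').
  by rewrite H !cvA (cancL _ OLL) -cvA -id_Delta_mul LiK.
by rewrite -(cancR (cv (Delta_id Li) (tens_1 Li)) XXi) P1 cocJ' -Q1 cancR.
Qed.

Lemma main_concl : exists phi : gT -> hT,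
    bijective phi /\ {morph phi : x y / (x * y)%g} /\
    gauge_equiv (push2 phi J) J'.
Proof.
have [y [Dy ey]] := exists_char flipLi epsLi coc_Li.
have DyL : Delta y = cv (tens y y) L by rewrite -Dy (cancR _ LiL).
have [yi yiE] : exists yi, yi = cv (muf L) (antipode y) by eexists.
have yyi : cv y yi = dl k 1%g.
  have := mu_Delta ey; rewrite DyL mu_tensl => <-.
  by rewrite yiE cvA.
have yiy : cv yi y = dl k 1%g by apply: cv_comm1.
have eyi : epsf yi = 1.
  by have := eps_cv y yi; rewrite yyi eps_dl ey mul1r.
have Dyy : cv (Delta yi) (Delta y) = dl k 1%g by rewrite -Delta_mul yiy Delta1.
have Dyy' : cv (Delta y) (Delta yi) = dl k 1%g by rewrite -Delta_mul yyi Delta1.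
have tyy : cv (tens y y) (tens yi yi) = dl k 1%g by rewrite tens_mul yyi tens_dl.
have tyy' : cv (tens yi yi) (tens y y) = dl k 1%g by rewrite tens_mul yiy tens_dl.
have LDyi : cv L (Delta yi) = tens yi yi.
  apply: esym; apply: (@inv_uniq _ _ (tens y y)) => //.
  by rewrite -Dy cvA -(cvA (Delta yi)) Dyy cv1l LLi.
pose u g := cv (cv y (F g)) yi.
have Du g : Delta (u g) = tens (u g) (u g).
  by rewrite /u !Delta_mul DG -!tens_mul -Dy -LDyi !cvA.
have eu g : epsf (u g) = 1 by rewrite /u !eps_cv ey F_eps eyi !mul1r.
have [phi phiP] := fin_all_exists (fun g => grouplike (Du g) (eu g)).
have Fphi g : F g = cv (cv yi (dl k (phi g))) y.
  by rewrite -phiP /u !cvA (cancL _ yiy) yiy cv1r.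
have phiM : {morph phi : x y / (x * y)%g}.
  move=> a b; apply: (@dl_inj k).
  rewrite -cv_dl -!phiP /u F_mul !cvA (cancL _ yiy).
  by [].
have phi_inj : injective phi.
  move=> a b E; apply: (@dl_inj k); apply: (bij_inj f_bij).
  by rewrite !lin_dl !Fphi E.
have phi_surj h : exists g, phi g = h.
  case: f_bij => finv fK Kf.
  pose a := finv (cv (cv yi (dl k h)) y).
  have : lin F a = cv (cv yi (lin (fun g => dl k (phi g)) a)) y.
    by rewrite cv_linl cv_linr; apply: eq_lin => g; rewrite Fphi.
  rewrite /a Kf => E.
  have E2 : dl k h = lin (fun g => dl k (phi g)) a.
    have cj X : cv (cv y (cv (cv yi X) y)) yi = X.
      by rewrite !cvA (cancL _ yyi) yyi cv1r.
    by have := congr1 (fun X => cv (cv y X) yi) E; rewrite /= !cj.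
  have := congr1 (fun X : {ffun hT -> k} => X h) E2; rewrite dlE eqxx lin_push.
  case: (pickP (fun g => phi g == h)) => [g /eqP <-|none]; first by exists g.
  by rewrite big_pred0 // => /eqP; rewrite oner_eq0.
have [psi psiP] := fin_all_exists phi_surj.
exists phi; split.
  by exists psi => [g|h]; [apply: phi_inj; rewrite psiP | apply: psiP].
split => //.
exists yi, y; split; first by split.
split => //.
have P2 : push2 phi J = lin (fun p => dl k (phi p.1, phi p.2)) J.
  by apply/ffunP => q; rewrite lin_push ffunE.
have KE : K = cv (cv (tens yi yi) (push2 phi J)) (tens y y).
  rewrite P2 cv_linl cv_linr /K; apply: eq_lin => p.
  by rewrite /F2 !Fphi -!tens_mul tens_dl.
have LiE : Li = cv (Delta yi) (tens y y) by rewrite -Dy (cancL _ Dyy).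
rewrite -LiK LiE KE.
change (cv (cv (Delta yi) (tens y y)) (cv (cv (tens yi yi) (push2 phi J)) (tens y y)) =
  cv (cv (Delta yi) (push2 phi J)) (tens y y)).
by rewrite !cvA (cancL _ tyy).
Qed.

End Main.

Unset Implicit Arguments.
Local Close Scope ring_scope.

Theorem lemma5p7 (k : closedFieldType) (gT hT : finGroupType)
  (J Ji : {ffun gT * gT -> k}) (J' Ji' : {ffun hT * hT -> k}) :
  [pchar k]%R =i pred0 ->
  is_twist J -> is_inv (@mul2 gT) (1%g, 1%g) J Ji ->
  is_twist J' -> is_inv (@mul2 hT) (1%g, 1%g) J' Ji' ->
  (exists F : gT -> {ffun hT -> k}, tri_hopf_iso J Ji J' Ji' F) ->
  exists phi : gT -> hT,
    bijective phi /\ {morph phi : x y / (x * y)%g} /\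
    gauge_equiv (push2 phi J) J'.
Proof.
move=> _ [_ [cocJ [_ epsJ]]] [JJi JiJ] [_ [cocJ' [_ epsJ']]] [J'Ji' Ji'J'] [F H].
case: H => fb [fm [f1 [fe [fD [_ fR]]]]].
exact: (@main_concl k gT hT J Ji J' Ji' F cocJ epsJ JJi JiJ cocJ' epsJ' J'Ji' Ji'J' fm f1 fe fD fR fb).
Qed.
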